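(* Let $g\sim(a,b,\mu)$ be a Bernstein function and $r:=r[g]$. Then \[\big[(t\operatorname{Re}z)\,e^{-t\operatorname{Re}z}\big]\,r(t)\le\operatorname{Re}g(z)\le|g(z)|\le\max(2,t|z|)\,r(t)\] for all $t>0$ and all $z\in\mathbb C$ with $\operatorname{Re}z>0$.
   Context: A Bernstein function $g\sim(a,b,\mu)$ is $g(z)=a+bz+\int_{(0,\infty)}(1-e^{-sz})\mu(\mathrm ds)$ ($\operatorname{Re} z>0$) with $a,b\ge0$, $\mu$ positive Radon on $(0,\infty)$, $\int\frac{s}{1+s}\mu(\mathrm ds)<\infty$. Rate function $r[g](t):=\frac a2+\frac bt+\int_{(0,\infty)}\min(s/t,1)\mu(\mathrm ds)$, $t>0$. *)

(* Defs.v *)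
From HB Require Import structures.
From mathcomp Require Import all_boot all_order all_algebra.
From mathcomp Require Import all_classical all_reals all_analysis.
Set Implicit Arguments. Unset Strict Implicit. Unset Printing Implicit Defensive.
Import Order.TTheory GRing.Theory Num.Theory.
Import numFieldNormedType.Exports.
Local Open Scope classical_set_scope.
Local Open Scope ring_scope.

(* A Bernstein function g ~ (a,b,mu): mu is a (Borel) measure on R; only its
   restriction to (0,oo) matters, since all integrals are over `]0,+oo[. *)
Definition bernstein_triple (R : realType) (a b : R)
  (mu : {measure set R -> \bar R}) : Prop :=
  0 <= a /\ 0 <= b /\
  mu.-integrable `]0%R, +oo[ (fun s : R => (s / (1 + s))%:E).

(* Real and imaginary parts of g(z) for z = x + i y:
   g(z) = a + b z + \int (1 - e^{-s z}) mu(ds),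
   e^{-s z} = e^{-s x} (cos (s y) - i sin (s y)). *)
Definition bern_re (R : realType) (a b : R) (mu : {measure set R -> \bar R})
  (x y : R) : R :=
  a + b * x + Rintegral mu `]0%R, +oo[ (fun s => 1 - expR (- (s * x)) * cos (s * y)).

Definition bern_im (R : realType) (a b : R) (mu : {measure set R -> \bar R})
  (x y : R) : R :=
  b * y + Rintegral mu `]0%R, +oo[ (fun s => expR (- (s * x)) * sin (s * y)).

Definition bern_abs (R : realType) (a b : R) (mu : {measure set R -> \bar R})
  (x y : R) : R :=
  Num.sqrt (bern_re a b mu x y ^+ 2 + bern_im a b mu x y ^+ 2).

Definition rate (R : realType) (a b : R) (mu : {measure set R -> \bar R})
  (t : R) : R :=
  a / 2 + b / t + Rintegral mu `]0%R, +oo[ (fun s => Num.min (s / t) 1).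

(* Main.v *)
Require Import Defs.
From HB Require Import structures.
From mathcomp Require Import all_boot all_order all_algebra.
From mathcomp Require Import all_classical all_reals all_analysis.
From mathcomp Require Import measurable_realfun.
From mathcomp Require Import ring lra.
Import Order.TTheory GRing.Theory Num.Theory.
Import numFieldNormedType.Exports.
Local Open Scope classical_set_scope.
Local Open Scope ring_scope.

Section H.
Context {R : realType}.

Lemma abs_sin_le0 (u : R) : 0 <= u -> `|sin u| <= u.
Proof.
move=> u0.
have [c _ hc] := MVT_segment (f:=@sin R) (df:=cos) u0 (fun x _ => is_derive_sin x)
  (continuous_subspaceT (@continuous_sin R)).
move: hc; rewrite sin0 !subr0 => ->.
rewrite normrM (ger0_norm u0).
have := cos_max c; have := normr_ge0 (cos c); nra.
Qed.

Lemma abs_sin_le (u : R) : `|sin u| <= `|u|.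
Proof.
have [u0|u0] := leP 0 u; first by rewrite (ger0_norm u0) abs_sin_le0.
have := @abs_sin_le0 (- u); rewrite sinN normrN (ltr0_norm u0); apply; lra.
Qed.

Lemma one_cos_le (q : R) : 1 - cos q <= q ^+ 2 / 2.
Proof.
have hq : q = q / 2 + q / 2 by lra.
have hc : cos q = 1 - 2 * sin (q/2) ^+ 2.
  rewrite {1}hq cosD; have := cos2Dsin2 (q/2); rewrite !expr2; lra.
rewrite hc.
have := abs_sin_le (q / 2).
have h := normr_ge0 (sin (q/2)).
have hb := normr_ge0 (q/2).
move=> hab.
have : `|sin (q/2)| ^+ 2 <= `|q/2| ^+ 2 by rewrite ler_sqr.
rewrite !real_normK ?num_real //.
rewrite !expr2; nra.
Qed.

Lemma sqrt_le_sq (A b : R) : 0 <= A -> 0 <= b -> A <= b ^+ 2 -> Num.sqrt A <= b.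
Proof.
move=> A0 b0 hA; have S0 := sqrtr_ge0 A; have := sqr_sqrtr A0.
set S := Num.sqrt A => hS; rewrite -hS !expr2 in hA; nra.
Qed.

Lemma cs_le (a b c d : R) :
  a * c + b * d <= Num.sqrt (a ^+ 2 + b ^+ 2) * Num.sqrt (c ^+ 2 + d ^+ 2).
Proof.
have h1 : 0 <= a ^+ 2 + b ^+ 2 by rewrite addr_ge0 // sqr_ge0.
have h2 : 0 <= c ^+ 2 + d ^+ 2 by rewrite addr_ge0 // sqr_ge0.
have := sqr_sqrtr h1; have := sqr_sqrtr h2.
have := sqrtr_ge0 (a ^+ 2 + b ^+ 2); have := sqrtr_ge0 (c ^+ 2 + d ^+ 2).
set P := Num.sqrt _; set Q := Num.sqrt _ => Q0 P0 hQ hP.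
have key : (a * c + b * d) ^+ 2 <= (P * Q) ^+ 2.
  rewrite exprMn hP hQ; have := sqr_ge0 (a * d - b * c); rewrite !expr2; nra.
have PQ0 : 0 <= P * Q by rewrite mulr_ge0.
move: key; rewrite !expr2; nra.
Qed.

Lemma uv_small (p q : R) : 0 <= p ->
  (1 - expR (- p) * cos q) ^+ 2 + (expR (- p) * sin q) ^+ 2 <= p ^+ 2 + q ^+ 2.
Proof.
move=> p0; have E0 := expR_gt0 (- p).
have E1 : expR (- p) <= 1 by rewrite expR_le1 oppr_le0.
have E2 := expR_ge1Dx (- p).
have hc := one_cos_le q.
have cs := cos2Dsin2 q.
set E := expR (- p) in E0 E1 E2 *.
have e1 : (1 - E * cos q) ^+ 2 + (E * sin q) ^+ 2 = (1 - E) ^+ 2 + 2 * E * (1 - cos q).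
  by rewrite !expr2 in cs *; nra.
rewrite e1 !expr2; rewrite !expr2 in hc; nra.
Qed.

Lemma uv_big (p q : R) : 0 <= p ->
  (1 - expR (- p) * cos q) ^+ 2 + (expR (- p) * sin q) ^+ 2 <= 2 ^+ 2.
Proof.
move=> p0; have E0 := expR_gt0 (- p).
have E1 : expR (- p) <= 1 by rewrite expR_le1 oppr_le0.
have c1 := cos_geN1 q; have c2 := cos_le1 q.
have cs := cos2Dsin2 q.
set E := expR (- p) in E0 E1 *.
rewrite !expr2 in cs *; nra.
Qed.

Lemma we_le (w : R) : 0 <= w -> w * expR (- w) <= 1 - expR (- w).
Proof.
move=> w0; have := expR_ge1Dx w; have E0 := expR_gt0 (- w).
have hE : expR w * expR (- w) = 1 by rewrite expRN mulfV // gt_eqF // expR_gt0.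
nra.
Qed.

Lemma minE' (s t : R) : 0 < t ->
  (s <= t /\ Num.min (s / t) 1 = s / t) \/ (t < s /\ Num.min (s / t) 1 = 1).
Proof.
move=> t0; have [h|h] := leP s t.
  left; split => //; apply: min_l; rewrite ler_pdivrMr // mul1r //.
right; split => //; apply: min_r; rewrite ler_pdivlMr // mul1r ltW //.
Qed.

Lemma low_pt (t x s y : R) : 0 < t -> 0 < x -> 0 < s ->
  t * x * expR (- (t * x)) * Num.min (s / t) 1 <= 1 - expR (- (s * x)) * cos (s * y).
Proof.
move=> t0 x0 s0.
have hc := cos_le1 (s * y).
have F0 := expR_gt0 (- (s * x)).
have hu : 1 - expR (- (s * x)) <= 1 - expR (- (s * x)) * cos (s * y) by nra.
apply: le_trans hu.
have W1 := we_le _ (ltW (mulr_gt0 t0 x0)).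
have W2 := we_le _ (ltW (mulr_gt0 s0 x0)).
have [[st ->]|[st ->]] := minE' s t t0.
- have hE : expR (- (t * x)) <= expR (- (s * x)) by rewrite ler_expR lerN2 ler_pM2r.
  have -> : t * x * expR (- (t * x)) * (s / t) = s * x * expR (- (t * x)).
    by field; rewrite gt_eqF.
  have : s * x * expR (- (t * x)) <= s * x * expR (- (s * x)).
    by rewrite ler_pM2l // mulr_gt0.
  lra.
- have hE : expR (- (s * x)) <= expR (- (t * x)) by rewrite ler_expR lerN2 ler_pM2r // ltW.
  rewrite mulr1; lra.
Qed.

Lemma up_pt (t x y s : R) : 0 < t -> 0 < x -> 0 < s ->
  Num.sqrt ((1 - expR (- (s * x)) * cos (s * y)) ^+ 2 + (expR (- (s * x)) * sin (s * y)) ^+ 2)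
  <= Num.max 2 (t * Num.sqrt (x ^+ 2 + y ^+ 2)) * Num.min (s / t) 1.
Proof.
move=> t0 x0 s0.
have p0 : 0 <= s * x by rewrite mulr_ge0 // ltW.
set A := ((1 - _) ^+ 2 + _ ^+ 2).
have A0 : 0 <= A by rewrite addr_ge0 // sqr_ge0.
have K0 := sqrtr_ge0 (x ^+ 2 + y ^+ 2).
have hK : Num.sqrt (x ^+ 2 + y ^+ 2) ^+ 2 = x ^+ 2 + y ^+ 2 by rewrite sqr_sqrtr // addr_ge0 // sqr_ge0.
set K := Num.sqrt _ in K0 hK *.
have Wsmall : Num.sqrt A <= s * K.
  apply: (sqrt_le_sq _ _ A0); first by rewrite mulr_ge0 // ltW.
  rewrite /A; apply: (le_trans (uv_small (s * x) (s * y) p0)).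
  by rewrite !exprMn hK mulrDr.
have Wbig : Num.sqrt A <= 2 by apply: (sqrt_le_sq _ _ A0) => //; exact: uv_big.
have M2 : 2 <= Num.max 2 (t * K) by rewrite le_max lexx.
have MK : t * K <= Num.max 2 (t * K) by rewrite le_max lexx orbT.
have [[st ->]|[st ->]] := minE' s t t0.
- apply: (le_trans Wsmall).
  have -> : s * K = (t * K) * (s / t) by field; rewrite gt_eqF.
  by rewrite ler_pM2r // divr_gt0.
- by rewrite mulr1; apply: (le_trans Wbig).
Qed.

Lemma dom_bound (f A B s : R) : 0 <= A -> 0 <= B -> 0 < s ->
  `|f| <= s * A -> `|f| <= B -> `|f| <= 2 * (A + B) * (s / (1 + s)).
Proof.
move=> A0 B0 s0 h1 h2.
have s1 : 0 < 1 + s by lra.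
rewrite mulrA ler_pdivlMr //.
have f0 := normr_ge0 f.
have [ss|ss] := leP s 1; nra.
Qed.

Lemma measurable_u (x y : R) :
  measurable_fun setT (fun s : R => 1 - expR (- (s * x)) * cos (s * y)).
Proof.
apply: measurable_funB; first exact: measurable_cst.
apply: measurable_funM.
  apply: measurableT_comp; first exact: measurable_expR.
  apply: measurable_funN; apply: measurable_funM; [exact: measurable_id|exact: measurable_cst].
apply: measurableT_comp; first exact: continuous_measurable_fun (@continuous_cos R).
apply: measurable_funM; [exact: measurable_id|exact: measurable_cst].
Qed.

Lemma measurable_v (x y : R) :
  measurable_fun setT (fun s : R => expR (- (s * x)) * sin (s * y)).
Proof.
apply: measurable_funM.
  apply: measurableT_comp; first exact: measurable_expR.
  apply: measurable_funN; apply: measurable_funM; [exact: measurable_id|exact: measurable_cst].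
apply: measurableT_comp; first exact: continuous_measurable_fun (@continuous_sin R).
apply: measurable_funM; [exact: measurable_id|exact: measurable_cst].
Qed.

Lemma measurable_m (t : R) :
  measurable_fun setT (fun s : R => Num.min (s / t) 1).
Proof.
apply: measurable_minr; last exact: measurable_cst.
apply: measurable_funM; [exact: measurable_id|exact: measurable_cst].
Qed.

Lemma pos_of_itv (s : R) : `]0, +oo[%classic s -> 0 < s.
Proof. by rewrite /= in_itv /= andbT. Qed.

Lemma integ_of (mu : {measure set R -> \bar R}) (f : R -> R) (A B : R) :
  mu.-integrable `]0, +oo[ (fun s => (s / (1 + s))%:E) ->
  measurable_fun setT f -> 0 <= A -> 0 <= B ->
  (forall s, 0 < s -> `|f s| <= s * A /\ `|f s| <= B) ->
  mu.-integrable `]0, +oo[ (EFin \o f).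
Proof.
move=> hi mf A0 B0 hb.
apply: (le_integrable (measurable_itv _) _ _ (integrableZl (measurable_itv _) (2 * (A + B)) hi)).
- apply/measurable_EFinP; exact: measurable_funS mf.
- move=> s Ds; have s0 := pos_of_itv _ Ds.
  have [h1 h2] := hb s s0.
  rewrite /= lee_fin.
  rewrite (@ger0_norm _ (_ * _)); first exact: dom_bound.
  apply: mulr_ge0; first lra.
  apply: divr_ge0; lra.
Qed.

Lemma abs_le_norm (a b : R) : `|a| <= Num.sqrt (a ^+ 2 + b ^+ 2).
Proof. by rewrite -sqrtr_sqr ler_sqrt ?addr_ge0 ?sqr_ge0 // lerDl sqr_ge0. Qed.

Lemma W_bounds (t x y s : R) : 0 < t -> 0 < x -> 0 < s ->
  let u := 1 - expR (- (s * x)) * cos (s * y) in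
  let v := expR (- (s * x)) * sin (s * y) in
  Num.sqrt (u ^+ 2 + v ^+ 2) <= s * Num.sqrt (x ^+ 2 + y ^+ 2) /\
  Num.sqrt (u ^+ 2 + v ^+ 2) <= 2.
Proof.
move=> t0 x0 s0 u v.
have p0 : 0 <= s * x by rewrite mulr_ge0 // ltW.
have A0 : 0 <= u ^+ 2 + v ^+ 2 by rewrite addr_ge0 // sqr_ge0.
have K0 := sqrtr_ge0 (x ^+ 2 + y ^+ 2).
have hK : Num.sqrt (x ^+ 2 + y ^+ 2) ^+ 2 = x ^+ 2 + y ^+ 2 by rewrite sqr_sqrtr // addr_ge0 // sqr_ge0.
set K := Num.sqrt _ in K0 hK *.
split.
  apply: (sqrt_le_sq _ _ A0); first by rewrite mulr_ge0 // ltW.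
  rewrite /u /v; apply: (le_trans (uv_small (s * x) (s * y) p0)).
  by rewrite !exprMn hK mulrDr.
by apply: (sqrt_le_sq _ _ A0) => //; exact: uv_big.
Qed.

Lemma scale_bounds (f c s A B : R) : `|f| <= s * A /\ `|f| <= B ->
  `|c * f| <= s * (`|c| * A) /\ `|c * f| <= `|c| * B.
Proof.
move=> [h1 h2]; have c0 := normr_ge0 c; rewrite normrM; split.
  by rewrite mulrCA ler_wpM2l.
by rewrite ler_wpM2l.
Qed.
End H.

Theorem lemma4p1 (R : realType) (a b : R) (mu : {measure set R -> \bar R})
  (hg : bernstein_triple a b mu) (t x y : R) (ht : 0 < t) (hx : 0 < x) :
  (t * x) * expR (- (t * x)) * rate a b mu t <= bern_re a b mu x y /\
  bern_re a b mu x y <= bern_abs a b mu x y /\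
  bern_abs a b mu x y <= Num.max 2 (t * Num.sqrt (x ^+ 2 + y ^+ 2)) * rate a b mu t.
Proof.
case: hg => a0 [b0 hi].
have mD : measurable (`]0%R, +oo[ : set R) := measurable_itv _.
set u := (fun s : R => 1 - expR (- (s * x)) * cos (s * y)).
set v := (fun s : R => expR (- (s * x)) * sin (s * y)).
set m := (fun s : R => Num.min (s / t) 1).
have K0 := sqrtr_ge0 (x ^+ 2 + y ^+ 2).
set K := Num.sqrt (x ^+ 2 + y ^+ 2) in K0 *.
have bu : forall s, 0 < s -> `|u s| <= s * K /\ `|u s| <= 2.
  move=> s s0; have [h1 h2] := W_bounds t x y s ht hx s0.
  have h3 := abs_le_norm (u s) (v s); split; [exact: le_trans h3 h1|exact: le_trans h3 h2].
have bv : forall s, 0 < s -> `|v s| <= s * K /\ `|v s| <= 2.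
  move=> s s0; have [h1 h2] := W_bounds t x y s ht hx s0.
  have h3 := abs_le_norm (v s) (u s); rewrite addrC in h3; split; [exact: le_trans h3 h1|exact: le_trans h3 h2].
have bm : forall s, 0 < s -> `|m s| <= s * t^-1 /\ `|m s| <= 1.
  move=> s s0; have ms0 : 0 <= m s.
    by rewrite /m le_min ler01 andbT divr_ge0 // ltW.
  rewrite ger0_norm //; split; last by rewrite /m ge_min lexx orbT.
  by rewrite /m ge_min lexx.
have iu : mu.-integrable `]0%R, +oo[ (EFin \o u).
  apply: (integ_of _ _ _ _ hi (measurable_u x y) K0 (ler0n _ 2)) => s s0; exact: bu.
have iv : mu.-integrable `]0%R, +oo[ (EFin \o v).
  apply: (integ_of _ _ _ _ hi (measurable_v x y) K0 (ler0n _ 2)) => s s0; exact: bv.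
have it0 : 0 <= t^-1 by rewrite invr_ge0 ltW.
have im : mu.-integrable `]0%R, +oo[ (EFin \o m).
  apply: (integ_of _ _ _ _ hi (measurable_m t) it0 ler01) => s s0; exact: bm.
have iscale : forall (c : R) (f : R -> R) A B, measurable_fun setT f -> 0 <= A -> 0 <= B ->
    (forall s, 0 < s -> `|f s| <= s * A /\ `|f s| <= B) ->
    mu.-integrable `]0%R, +oo[ (EFin \o (fun s => c * f s)).
  move=> c f A B mf A0 B0 hb.
  apply: (integ_of _ _ _ _ hi _ (mulr_ge0 (normr_ge0 c) A0) (mulr_ge0 (normr_ge0 c) B0)).
    by apply: measurable_funM => //; exact: measurable_cst.
  by move=> s s0; apply: scale_bounds; exact: hb.
have Im0 : 0 <= Rintegral mu `]0%R, +oo[ m.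
  apply: Rintegral_ge0 => s Ds; rewrite /m le_min ler01 andbT divr_ge0 // ltW //.
  exact: pos_of_itv.
have mid : bern_re a b mu x y <= bern_abs a b mu x y.
  exact: le_trans (ler_norm _) (abs_le_norm _ _).
split; last split => //.
-
  rewrite /rate /bern_re -/u -/m.
  set c := t * x * expR (- (t * x)).
  have c0 : 0 <= c by rewrite mulr_ge0 ?mulr_ge0 ?ltW ?expR_gt0.
  have c1 : c <= 1.
    have := we_le (t * x) (ltW (mulr_gt0 ht hx)); have := expR_gt0 (- (t * x)).
    rewrite /c; lra.
  have hI : c * Rintegral mu `]0%R, +oo[ m <= Rintegral mu `]0%R, +oo[ u.
    rewrite -RintegralZl //; apply: le_Rintegral => //.
      exact: (iscale c m _ _ (measurable_m t) it0 ler01 bm).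
    move=> s Ds; have s0 := pos_of_itv _ Ds.
    exact: low_pt.
  have hb : c * (b / t) <= b * x.
    have E1 : expR (- (t * x)) <= 1 by rewrite expR_le1 oppr_le0 mulr_ge0 // ltW.
    have -> : c * (b / t) = b * x * expR (- (t * x)) by rewrite /c; field; rewrite gt_eqF.
    have bx0 : 0 <= b * x by rewrite mulr_ge0 // ltW.
    nra.
  have ha : c * (a / 2) <= a by nra.
  rewrite !mulrDr; lra.
-
  set M := Num.max 2 (t * K).
  have M2 : 2 <= M by rewrite le_max lexx.
  have MK : t * K <= M by rewrite le_max lexx orbT.
  set N := bern_abs a b mu x y.
  have N0 : 0 <= N by exact: sqrtr_ge0.
  set re := bern_re a b mu x y in mid *.
  set ii := bern_im a b mu x y.
  have hN : N ^+ 2 = re * re + ii * ii.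
    by rewrite /N /bern_abs sqr_sqrtr ?addr_ge0 ?sqr_ge0 // !expr2.
  have hre : re = a + b * x + Rintegral mu `]0%R, +oo[ u by [].
  have hii : ii = b * y + Rintegral mu `]0%R, +oo[ v by [].
  have hint : re * Rintegral mu `]0%R, +oo[ u + ii * Rintegral mu `]0%R, +oo[ v
      <= N * M * Rintegral mu `]0%R, +oo[ m.
    rewrite -!RintegralZl // -RintegralD //; last 2 first.
      exact: (iscale re u _ _ (measurable_u x y) K0 (ler0n _ 2) bu).
      exact: (iscale ii v _ _ (measurable_v x y) K0 (ler0n _ 2) bv).
    apply: le_Rintegral => //.
    + apply: (eq_integrable mD _ _ _ (integrableD mD
        (iscale re u _ _ (measurable_u x y) K0 (ler0n _ 2) bu)
        (iscale ii v _ _ (measurable_v x y) K0 (ler0n _ 2) bv))).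
      by move=> s _.
    + exact: (iscale (N * M) m _ _ (measurable_m t) it0 ler01 bm).
    + move=> s Ds; have s0 := pos_of_itv _ Ds.
      apply: (le_trans (cs_le re ii (u s) (v s))).
      rewrite -/(bern_abs a b mu x y) -/N -mulrA ler_wpM2l //.
      exact: up_pt.
  have hxy : re * x + ii * y <= N * K by exact: cs_le.
  have hra : re * a <= N * a by rewrite ler_wpM2r.
  have key : N ^+ 2 <= N * (a + b * K + M * Rintegral mu `]0%R, +oo[ m).
    rewrite hN.
    have -> : re * re + ii * ii = re * a + b * (re * x + ii * y)
        + (re * Rintegral mu `]0%R, +oo[ u + ii * Rintegral mu `]0%R, +oo[ v).
      by rewrite hre hii; ring.
    have : b * (re * x + ii * y) <= b * (N * K) by rewrite ler_wpM2l.
    nra.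
  have hQ : a + b * K + M * Rintegral mu `]0%R, +oo[ m <= M * rate a b mu t.
    rewrite /rate -/m !mulrDr.
    have h1 : a <= M * (a / 2) by nra.
    have h2 : b * K <= M * (b / t).
      have -> : M * (b / t) = (M * b) / t by rewrite mulrA.
      rewrite ler_pdivlMr //.
      have : t * K * b <= M * b by rewrite ler_wpM2r.
      lra.
    lra.
  have Q0 : 0 <= a + b * K + M * Rintegral mu `]0%R, +oo[ m.
    have : 0 <= M * Rintegral mu `]0%R, +oo[ m by rewrite mulr_ge0 //; lra.
    have : 0 <= b * K by rewrite mulr_ge0.
    lra.
  apply: le_trans hQ.
  move: key; rewrite expr2; set Q := (a + _ + _) in Q0 *; nra.
Qed.
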